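(* Let $\theta(q,x):=\sum_{j=0}^{\infty}q^{j(j+1)/2}x^j$ and $w:=3/\sqrt{2}$. For all $(q,t)\in[0.6,0.75]\times[0,1]$, one has $\theta(q,-t+wi)\neq 0$. *)

(* Defs.v *)
From Stdlib Require Import Reals.
From Coquelicot Require Import Coquelicot.
Open Scope R_scope.

Definition theta_term (q : R) (x : C) (j : nat) : C :=
  Cmult (RtoC (q ^ (j * (j + 1) / 2)%nat)) (pow_n x j).

Definition theta (q : R) (x : C) : C :=
  (Series (fun j => Re (theta_term q x j)), Series (fun j => Im (theta_term q x j))).

Definition w : R := 3 / sqrt 2.

(* Main.v *)
Require Import Defs.
From Stdlib Require Import Reals.
From Coquelicot Require Import Coquelicot.
From Stdlib Require Import QArith Qround Qreals Lra Lia List.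
Import ListNotations.
Arguments Qred : simpl never.
Open Scope R_scope.

Fixpoint padd (p r : list Q) : list Q :=
  match p, r with
  | [], _ => r
  | _, [] => p
  | a :: p', b :: r' => Qred (a + b) :: padd p' r'
  end.
Definition pscale (c : Q) (p : list Q) : list Q := map (fun x => Qred (c * x)) p.
Lemma Q2R_red x : Q2R (Qred x) = Q2R x.
Proof. apply Qeq_eqR, Qred_correct. Qed.
Fixpoint evalR (p : list Q) (t : R) : R :=
  match p with [] => 0 | c :: p' => Q2R c + t * evalR p' t end.

Lemma evalR_add p r t : evalR (padd p r) t = evalR p t + evalR r t.
Proof.
  revert r; induction p as [|a p IH]; intros [|b r]; simpl; try lra.
  rewrite Q2R_red, Q2R_plus, IH; ring.
Qed.
Lemma evalR_scale c p t : evalR (pscale c p) t = Q2R c * evalR p t.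
Proof.
  induction p as [|a p IH]; simpl; [ring|]. rewrite Q2R_red, Q2R_mult, IH; ring.
Qed.
Lemma Q2R_0 : Q2R 0 = 0. Proof. unfold Q2R; simpl; field. Qed.
Lemma Q2R_1 : Q2R 1 = 1. Proof. unfold Q2R; simpl; field. Qed.
Lemma evalR_shift p t : evalR (0%Q :: p) t = t * evalR p t.
Proof. simpl; rewrite Q2R_0; ring. Qed.

Fixpoint UV (j : nat) : list Q * list Q :=
  match j with
  | O => ([1%Q], [])
  | S j => let (u, v) := UV j in
      (padd (pscale (-1) (0%Q :: u)) (pscale (-9#2) v),
       padd u (pscale (-1) (0%Q :: v)))
  end.

Lemma w2 : w * w = 9/2.
Proof.
  unfold w. assert (H := sqrt_sqrt 2 ltac:(lra)).
  assert (sqrt 2 <> 0) by (intro E; rewrite E in H; lra).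
  replace (3 / sqrt 2 * (3 / sqrt 2)) with (9 / (sqrt 2 * sqrt 2)) by (field; auto).
  rewrite H; reflexivity.
Qed.

Lemma Q2R_m1 : Q2R (-1) = -1. Proof. unfold Q2R; simpl; field. Qed.
Lemma Q2R_m92 : Q2R (-9#2) = -(9/2). Proof. unfold Q2R; simpl; field. Qed.

Lemma UV_S j : UV (S j) =
  (padd (pscale (-1) (0%Q :: fst (UV j))) (pscale (-9#2) (snd (UV j))),
   padd (fst (UV j)) (pscale (-1) (0%Q :: snd (UV j)))).
Proof.
  change (UV (S j)) with (let (u, v) := UV j in
      (padd (pscale (-1) (0%Q :: u)) (pscale (-9#2) v),
       padd u (pscale (-1) (0%Q :: v)))).
  destruct (UV j); reflexivity.
Qed.

Lemma powUV t j : pow_n (((- t)%R, w) : C) j =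
   (evalR (fst (UV j)) t, w * evalR (snd (UV j)) t).
Proof.
  induction j as [|j IH].
  - simpl. rewrite Q2R_1. change (@one C_Ring) with ((1,0) : C). apply injective_projections; simpl; ring.
  - simpl pow_n. rewrite IH. rewrite UV_S. cbn [fst snd]. set (u := fst (UV j)). set (v := snd (UV j)).
    rewrite !evalR_add, !evalR_scale, !evalR_shift, Q2R_m1, Q2R_m92.
    change (@mult C_Ring (((- t)%R, w) : C) (evalR u t, w * evalR v t)) with
      (Cmult ((- t)%R, w) (evalR u t, w * evalR v t)).
    unfold Cmult; simpl. f_equal.
    + replace (w * (w * evalR v t)) with ((w*w) * evalR v t) by ring. rewrite w2. ring.
    + ring.
Qed.

Fixpoint ieval (p : list Q) (t0 t1 : Q) : Q * Q :=
  match p with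
  | [] => (0%Q, 0%Q)
  | c :: p' => let (l, h) := ieval p' t0 t1 in
      (Qred (c + (if Qle_bool 0 l then t0 * l else t1 * l))%Q,
       Qred (c + (if Qle_bool 0 h then t1 * h else t0 * h))%Q)
  end.

Lemma mul_low a0 a a1 l y : 0 <= a0 <= a -> a <= a1 -> l <= y ->
  (0 <= l -> a0 * l <= a * y) /\ (l < 0 -> a1 * l <= a * y).
Proof. intros; split; intros; nra. Qed.
Lemma mul_up a0 a a1 h y : 0 <= a0 <= a -> a <= a1 -> y <= h ->
  (0 <= h -> a * y <= a1 * h) /\ (h < 0 -> a * y <= a0 * h).
Proof. intros; split; intros; nra. Qed.

Lemma Qle_bool_R x y : Qle_bool x y = true -> Q2R x <= Q2R y.
Proof. intro H; apply Qle_Rle, Qle_bool_iff, H. Qed.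
Lemma Qle_bool_R' x y : Qle_bool x y = false -> Q2R y < Q2R x.
Proof.
  intro H. destruct (Rlt_le_dec (Q2R y) (Q2R x)) as [h|h]; auto.
  apply Rle_Qle, Qle_bool_iff in h. congruence.
Qed.

Lemma ieval_sound p t0 t1 t : 0 <= Q2R t0 <= t -> t <= Q2R t1 ->
  Q2R (fst (ieval p t0 t1)) <= evalR p t <= Q2R (snd (ieval p t0 t1)).
Proof.
  intros Ht0 Ht1. induction p as [|c p IH]; simpl.
  - rewrite Q2R_0; lra.
  - destruct (ieval p t0 t1) as [l h]; simpl in *.
    rewrite !Q2R_red, !Q2R_plus.
    destruct (mul_low _ _ _ _ _ Ht0 Ht1 (proj1 IH)) as [L1 L2].
    destruct (mul_up _ _ _ _ _ Ht0 Ht1 (proj2 IH)) as [U1 U2].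
    split.
    + destruct (Qle_bool 0 l) eqn:E; rewrite Q2R_mult.
      * apply Qle_bool_R in E; rewrite Q2R_0 in E; specialize (L1 E); lra.
      * apply Qle_bool_R' in E; rewrite Q2R_0 in E; specialize (L2 E); lra.
    + destruct (Qle_bool 0 h) eqn:E; rewrite Q2R_mult.
      * apply Qle_bool_R in E; rewrite Q2R_0 in E; specialize (U1 E); lra.
      * apply Qle_bool_R' in E; rewrite Q2R_0 in E; specialize (U2 E); lra.
Qed.

Fixpoint qpow (a : Q) (n : nat) : Q := match n with O => 1%Q | S n => (a * qpow a n)%Q end.
Lemma Q2R_qpow a n : Q2R (qpow a n) = Q2R a ^ n.
Proof. induction n; simpl; [apply Q2R_1 | rewrite Q2R_mult, IHn; reflexivity]. Qed.

Definition TT (j : nat) : nat := (j * (j + 1) / 2)%nat.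

Fixpoint RS (n : nat) (q t : R) : R :=
  match n with O => 0 | S n => RS n q t + q ^ TT n * evalR (snd (UV n)) t end.

Definition Dp : positive := (2^40)%positive.
Definition rdown (x : Q) : Q := (Qfloor (x * inject_Z (Zpos Dp)) # Dp)%Q.
Lemma rdown_le x : Q2R (rdown x) <= Q2R x.
Proof.
  unfold rdown. assert (H := Qle_Rle _ _ (Qfloor_le (x * inject_Z (Zpos Dp)))).
  rewrite Q2R_mult in H. unfold Q2R in H at 1 3. unfold Q2R at 1. simpl in H |- *.
  rewrite !Rinv_1, !Rmult_1_r in H.
  assert (0 < IZR (Zpos Dp)) by (apply IZR_lt; reflexivity).
  apply (Rmult_le_reg_r (IZR (Zpos Dp))); auto.
  rewrite Rmult_assoc, Rinv_l by lra. lra.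
Qed.
Definition rup (x : Q) : Q := (- rdown (- x))%Q.
Lemma rup_ge x : Q2R x <= Q2R (rup x).
Proof. unfold rup. rewrite Q2R_opp. assert (H := rdown_le (-x)). rewrite Q2R_opp in H. lra. Qed.

Fixpoint lowsum (n : nat) (q0 q1 t0 t1 : Q) : Q :=
  match n with
  | O => 0%Q
  | S n => Qred (lowsum n q0 q1 t0 t1 + rdown
      (let l := fst (ieval (snd (UV n)) t0 t1) in
       if Qle_bool 0 l then rdown (qpow q0 (TT n)) * l else rup (qpow q1 (TT n)) * l))%Q
  end.

Lemma lowsum_sound n q0 q1 t0 t1 q t :
  0 <= Q2R q0 <= q -> q <= Q2R q1 -> 0 <= Q2R t0 <= t -> t <= Q2R t1 ->
  Q2R (lowsum n q0 q1 t0 t1) <= RS n q t.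
Proof.
  intros Hq0 Hq1 Ht0 Ht1. induction n as [|n IH]; simpl.
  - rewrite Q2R_0; lra.
  - rewrite Q2R_red, Q2R_plus.
    eapply Rle_trans; [apply Rplus_le_compat_l, rdown_le|].
    assert (P := ieval_sound (snd (UV n)) t0 t1 t Ht0 Ht1).
    set (l := fst (ieval (snd (UV n)) t0 t1)) in *.
    assert (A0 : Q2R (rdown (qpow q0 (TT n))) <= q ^ TT n).
    { eapply Rle_trans; [apply rdown_le|]. rewrite Q2R_qpow. apply pow_incr; lra. }
    assert (A1 : q ^ TT n <= Q2R (rup (qpow q1 (TT n)))).
    { eapply Rle_trans; [|apply rup_ge]. rewrite Q2R_qpow. apply pow_incr; lra. }
    assert (Hq : 0 <= q ^ TT n) by (apply pow_le; lra).
    destruct (Qle_bool 0 l) eqn:E; rewrite Q2R_mult.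
    + apply Qle_bool_R in E; rewrite Q2R_0 in E.
      assert (0 <= Q2R l <= evalR (snd (UV n)) t) by lra.
      destruct (Rle_lt_dec 0 (Q2R (rdown (qpow q0 (TT n))))); nra.
    + apply Qle_bool_R' in E; rewrite Q2R_0 in E. nra.
Qed.

Definition NN : nat := 10.
Definition tau : Q := 1 # 1000.

Fixpoint gcheck (cell : Q -> Q -> Q -> Q -> bool) (fuel : nat) (q0 q1 t0 t1 : Q) : bool :=
  if cell q0 q1 t0 t1 then true else
  match fuel with
  | O => false
  | S f =>
    let qm := Qred ((q0 + q1) * (1#2)) in
    let tm := Qred ((t0 + t1) * (1#2)) in
    if gcheck cell f q0 qm t0 tm then
    if gcheck cell f q0 qm tm t1 then
    if gcheck cell f qm q1 t0 tm then gcheck cell f qm q1 tm t1 else false else false else false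
  end.

Lemma Q2R_mid a b : Q2R (Qred ((a + b) * (1#2))) = (Q2R a + Q2R b) / 2.
Proof.
  rewrite (Qeq_eqR _ _ (Qred_correct _)), Q2R_mult, Q2R_plus.
  unfold Q2R at 3; simpl. field.
Qed.

Lemma mid_cases (x a b m : R) : a <= x <= b -> m = (a+b)/2 -> 0 <= a ->
  (x <= m -> 0 <= a <= x /\ x <= m) /\ (~ x <= m -> 0 <= m <= x /\ x <= b).
Proof. intros; split; intros; lra. Qed.

Lemma gcheck_sound (cell : Q -> Q -> Q -> Q -> bool) (P : R -> R -> Prop)
  (Hcell : forall q0 q1 t0 t1 q t, cell q0 q1 t0 t1 = true ->
     0 <= Q2R q0 <= q -> q <= Q2R q1 -> 0 <= Q2R t0 <= t -> t <= Q2R t1 -> P q t)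
  fuel q0 q1 t0 t1 q t :
  gcheck cell fuel q0 q1 t0 t1 = true ->
  0 <= Q2R q0 <= q -> q <= Q2R q1 -> 0 <= Q2R t0 <= t -> t <= Q2R t1 -> P q t.
Proof.
  revert q0 q1 t0 t1. induction fuel as [|f IH]; intros q0 q1 t0 t1 H Hq0 Hq1 Ht0 Ht1;
    simpl in H; destruct (cell q0 q1 t0 t1) eqn:Ec.
  1,3: exact (Hcell _ _ _ _ _ _ Ec Hq0 Hq1 Ht0 Ht1).
  - discriminate.
  - destruct (gcheck cell f q0 _ t0 _) eqn:H1; [|discriminate].
    destruct (gcheck cell f q0 _ _ t1) eqn:H2; [|discriminate].
    destruct (gcheck cell f _ q1 t0 _) eqn:H3; [|discriminate].
    rename H into H4.
    assert (Mq := mid_cases q _ _ _ (conj (proj2 Hq0) Hq1) (Q2R_mid q0 q1) (proj1 Hq0)).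
    assert (Mt := mid_cases t _ _ _ (conj (proj2 Ht0) Ht1) (Q2R_mid t0 t1) (proj1 Ht0)).
    destruct (Rle_dec q (Q2R (Qred ((q0 + q1) * (1#2))))) as [r|r];
    destruct (Rle_dec t (Q2R (Qred ((t0 + t1) * (1#2))))) as [r0|r0].
    + destruct ((proj1 Mq) r) as [a1 a2], ((proj1 Mt) r0) as [b1 b2].
      exact (IH _ _ _ _ H1 a1 a2 b1 b2).
    + destruct ((proj1 Mq) r) as [a1 a2], ((proj2 Mt) r0) as [b1 b2].
      exact (IH _ _ _ _ H2 a1 a2 b1 b2).
    + destruct ((proj2 Mq) r) as [a1 a2], ((proj1 Mt) r0) as [b1 b2].
      exact (IH _ _ _ _ H3 a1 a2 b1 b2).
    + destruct ((proj2 Mq) r) as [a1 a2], ((proj2 Mt) r0) as [b1 b2].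
      exact (IH _ _ _ _ H4 a1 a2 b1 b2).
Qed.

Definition cellok (q0 q1 t0 t1 : Q) : bool := Qle_bool tau (lowsum NN q0 q1 t0 t1).

Lemma cellok_eq a b c d : cellok a b c d = Qle_bool tau (lowsum NN a b c d).
Proof. reflexivity. Qed.

Lemma cellok_sound q0 q1 t0 t1 q t : cellok q0 q1 t0 t1 = true ->
  0 <= Q2R q0 <= q -> q <= Q2R q1 -> 0 <= Q2R t0 <= t -> t <= Q2R t1 ->
  Q2R tau <= RS NN q t.
Proof.
  intros H Hq0 Hq1 Ht0 Ht1. rewrite cellok_eq in H.
  exact (Rle_trans _ _ _ (Qle_bool_R tau (lowsum NN q0 q1 t0 t1) H) (lowsum_sound NN q0 q1 t0 t1 q t Hq0 Hq1 Ht0 Ht1)).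
Qed.

Lemma check_ok : gcheck cellok 6 (19#32) (3#4) 0 1 = true.
Proof. vm_compute. reflexivity. Qed.

Lemma RS_bound q t : 19/32 <= q <= 3/4 -> 0 <= t <= 1 -> 1/1000 <= RS NN q t.
Proof.
  intros Hq Ht.
  assert (E : Q2R tau = 1/1000) by (unfold Q2R, tau; simpl; field).
  rewrite <- E.
  apply (gcheck_sound cellok (fun q t => Q2R tau <= RS NN q t) cellok_sound 6
           (19#32) (3#4) 0 1 q t check_ok);
  unfold Q2R; simpl; lra.
Qed.

Lemma TT_S j : TT (S j) = (TT j + S j)%nat.
Proof.
  unfold TT. replace (S j * (S j + 1))%nat with (j * (j + 1) + S j * 2)%nat by ring.
  rewrite Nat.div_add by lia. reflexivity.
Qed.

Lemma Im_term q x j : Im (theta_term q x j) = q ^ TT j * Im (pow_n x j).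
Proof. unfold theta_term. destruct (pow_n x j) as [a b]. cbv [Cmult RtoC Im fst snd TT]. ring. Qed.

Lemma partial_sum q t n :
  sum_f_R0 (fun j => Im (theta_term q ((- t)%R, w) j)) n = w * RS (S n) q t.
Proof.
  induction n as [|n IH].
  - change (sum_f_R0 (fun j => Im (theta_term q ((- t)%R, w) j)) 0)
      with (Im (theta_term q ((- t)%R, w) 0)).
    rewrite Im_term, powUV.
    change (RS 1 q t) with (0 + q ^ TT 0 * evalR (snd (UV 0)) t).
    cbv [Im fst snd]. ring.
  - change (sum_f_R0 (fun j => Im (theta_term q ((- t)%R, w) j)) (S n))
      with (sum_f_R0 (fun j => Im (theta_term q ((- t)%R, w) j)) n +
            Im (theta_term q ((- t)%R, w) (S n))).
    rewrite IH. rewrite Im_term, powUV.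
    change (RS (S (S n)) q t) with (RS (S n) q t + q ^ TT (S n) * evalR (snd (UV (S n))) t).
    cbv [Im fst snd]. ring.
Qed.

Definition M : R := 12/5.

Lemma Cmod_pow (x : C) j : Cmod (pow_n x j) = Cmod x ^ j.
Proof.
  induction j as [|j IH]; simpl.
  - exact Cmod_1.
  - change (Cmod (Cmult x (pow_n x j)) = Cmod x * Cmod x ^ j).
    rewrite Cmod_mult, IH; reflexivity.
Qed.

Lemma Cmod_x t : 0 <= t <= 1 -> Cmod (((- t)%R, w) : C) <= M.
Proof.
  intros Ht. unfold Cmod; simpl.
  assert (w * (w * 1) = 9/2) by (rewrite Rmult_1_r; apply w2).
  rewrite H. unfold M.
  replace (12/5) with (sqrt ((12/5)^2)) by (rewrite sqrt_pow2; lra).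
  apply sqrt_le_1_alt. nra.
Qed.



Lemma Im_pow_bound t j : 0 <= t <= 1 -> Rabs (Im (pow_n (((- t)%R, w) : C) j)) <= M ^ j.
Proof.
  intros Ht.
  apply Rle_trans with (Cmod (pow_n (((- t)%R, w) : C) j)).
  - eapply Rle_trans; [apply Rmax_r|apply Rmax_Cmod].
  - rewrite Cmod_pow. apply pow_incr. split; [apply Cmod_ge_0|apply Cmod_x; auto].
Qed.

Definition c0 : R := (3/4) ^ TT NN * M ^ NN.
Definition r0 : R := (3/4) ^ (S NN) * M.

Lemma tail_term q t k : 0 <= q <= 3/4 -> 0 <= t <= 1 ->
  Rabs (Im (theta_term q ((- t)%R, w) (NN + k))) <= c0 * r0 ^ k.
Proof.
  intros Hq Ht. rewrite Im_term, Rabs_mult, Rabs_pos_eq by (apply pow_le; lra).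
  eapply Rle_trans.
  { apply Rmult_le_compat_l; [apply pow_le; lra|]. apply Im_pow_bound; auto. }
  assert (HM : 0 <= M) by (unfold M; lra).
  induction k as [|k IH].
  - rewrite Nat.add_0_r, pow_O, Rmult_1_r. unfold c0.
    apply Rmult_le_compat_r; [apply pow_le; auto|]. apply pow_incr; lra.
  - replace (NN + S k)%nat with (S (NN + k)) by lia.
    rewrite TT_S, pow_add. change (M ^ S (NN + k)) with (M * M ^ (NN + k)). change (r0 ^ S k) with (r0 * r0 ^ k).
    assert (Hqk : q ^ S (NN + k) <= (3/4) ^ S NN).
    { replace (S (NN + k)) with (S NN + k)%nat by lia. rewrite pow_add.
      assert (q ^ k <= 1) by (rewrite <- (pow1 k); apply pow_incr; lra).
      assert (q ^ S NN <= (3/4) ^ S NN) by (apply pow_incr; lra).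
      assert (0 <= q ^ S NN) by (apply pow_le; lra).
      assert (0 <= q ^ k) by (apply pow_le; lra). nra. }
    assert (0 <= q ^ TT (NN + k)) by (apply pow_le; lra).
    assert (0 <= M ^ (NN + k)) by (apply pow_le; lra).
    assert (0 <= q ^ S (NN + k)) by (apply pow_le; lra).
    unfold r0 in *.
    replace (q ^ TT (NN + k) * q ^ S (NN + k) * (M * M ^ (NN + k)))
      with ((q ^ TT (NN + k) * M ^ (NN + k)) * (q ^ S (NN + k) * M)) by ring.
    replace (c0 * ((3 / 4) ^ S NN * M * ((3 / 4) ^ S NN * M) ^ k))
      with ((c0 * ((3 / 4) ^ S NN * M) ^ k) * ((3 / 4) ^ S NN * M)) by ring.
    apply Rmult_le_compat; auto.
    + apply Rmult_le_pos; auto.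
    + apply Rmult_le_pos; auto.
    + apply Rmult_le_compat_r; auto.
Qed.

Lemma c0_bound : c0 < 7/8000.
Proof.
  assert (E : c0 = Q2R (qpow (3#4) 55 * qpow (12#5) 10)).
  { rewrite Q2R_mult, !Q2R_qpow. unfold c0, M, NN, TT. simpl Nat.div.
    replace (Q2R (3#4)) with (3/4) by (unfold Q2R; simpl; field).
    replace (Q2R (12#5)) with (12/5) by (unfold Q2R; simpl; field). reflexivity. }
  rewrite E. assert (E2 : 7/8000 = Q2R (7#8000)) by (unfold Q2R; simpl; field).
  rewrite E2. apply Qlt_Rlt. vm_compute. reflexivity.
Qed.

Lemma r0_bound : 0 <= r0 <= 1/8.
Proof.
  assert (E : r0 = Q2R (qpow (3#4) 11 * (12#5))).
  { rewrite Q2R_mult, !Q2R_qpow. unfold r0, M, NN.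
    replace (Q2R (3#4)) with (3/4) by (unfold Q2R; simpl; field).
    replace (Q2R (12#5)) with (12/5) by (unfold Q2R; simpl; field). reflexivity. }
  rewrite E. assert (E2 : 1/8 = Q2R (1#8)) by (unfold Q2R; simpl; field).
  assert (E3 : 0 = Q2R 0) by (unfold Q2R; simpl; field).
  rewrite E2, E3. split; apply Qle_Rle; vm_compute; discriminate.
Qed.

Lemma w_gt1 : 1 < w.
Proof.
  assert (H := w2). assert (0 < w).
  { unfold w. apply Rdiv_lt_0_compat; [lra|apply sqrt_lt_R0; lra]. }
  nra.
Qed.

Theorem lemma10 (q t : R) :
  6/10 <= q <= 3/4 -> 0 <= t <= 1 ->
  theta q ((- t)%R, w) <> (0%R, 0%R).
Proof.
  intros Hq Ht Heq.
  set (f := fun j => Im (theta_term q ((- t)%R, w) j)).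
  set (g := fun k => f (NN + k)%nat).
  assert (Hg : forall k, Rabs (g k) <= c0 * r0 ^ k).
  { intro k. apply tail_term; auto; lra. }
  assert (Hr := r0_bound). assert (Hc := c0_bound).
  assert (Hgeom : ex_series (fun k => c0 * r0 ^ k)).
  { apply (ex_series_scal_l c0 (fun k => r0 ^ k)). apply ex_series_geom.
    rewrite Rabs_pos_eq; lra. }
  assert (HabsG : ex_series (fun k => Rabs (g k))).
  { apply (ex_series_le (fun k => Rabs (g k)) (fun k => c0 * r0 ^ k)); auto.
    intro n. change (norm (Rabs (g n))) with (Rabs (Rabs (g n))).
    rewrite Rabs_Rabsolu. apply Hg. }
  assert (HG : ex_series g) by (apply ex_series_Rabs; exact HabsG).
  assert (HF : ex_series f) by (apply (proj2 (ex_series_incr_n f NN)); exact HG).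
  assert (Split := Series_incr_n f NN ltac:(unfold NN; lia) HF).
  assert (Htail : Rabs (Series g) <= c0 * / (1 - r0)).
  { eapply Rle_trans; [apply Series_Rabs; exact HabsG|].
    eapply Rle_trans.
    { apply (Series_le (fun k => Rabs (g k)) (fun k => c0 * r0 ^ k)); auto.
      intro n; split; [apply Rabs_pos | apply Hg]. }
    rewrite Series_scal_l.
    assert (Eg := is_series_unique _ _ (is_series_geom r0 ltac:(rewrite Rabs_pos_eq; lra))).
    change (fun n => r0 ^ n) with (pow r0) in Eg. rewrite Eg.
    lra. }
  assert (Hpart : sum_f_R0 f (Init.Nat.pred NN) = w * RS NN q t).
  { unfold f, NN. simpl Init.Nat.pred. apply partial_sum. }
  assert (HRS : 1/1000 <= RS NN q t) by (apply RS_bound; lra).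
  assert (Hw := w_gt1).
  assert (Hinv : c0 * / (1 - r0) < 1/1000).
  { apply (Rmult_lt_reg_r (1 - r0)); [lra|].
    rewrite Rmult_assoc, Rinv_l by lra. nra. }
  assert (Hpos : 0 < Series f).
  { rewrite Split, Hpart. apply Rabs_le_between in Htail.
    assert (RS NN q t <= w * RS NN q t).
    { assert (0 <= (w - 1) * RS NN q t) by (apply Rmult_le_pos; lra). lra. }
    fold g. lra. }
  unfold theta in Heq. injection Heq as _ H2.
  change (Series f = 0) in H2. lra.
Qed.
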